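(* For $T\ge1$, let $N(T)$ be the number of distinct orbits $o$ in $\mathbb{Z}^2$ with $\operatorname{length}(o)\le T$, and let $S(T)$ be the sum of their lengths. Then: - $N(T)=\frac1{96}T^2+O(T)$; - $S(T)=\frac1{144}T^3+O(T^2)$; - consequently $S(T)/N(T)=\frac23T+O(1)$.
   Context: Define $\mathcal K_1(x_1,x_2)=(-x_1+x_2,x_2)$ and $\mathcal K_2(x_1,x_2)=(x_1,x_1-x_2)$ on $\mathbb{Z}^2$. The orbit $o(\mathbf{x})$ is the set of points obtained from $\mathbf{x}$ by repeated application of $\mathcal K_1,\mathcal K_2$: $(x_1,x_2)$, $(-x_1+x_2,x_2)$, $(-x_1+x_2,-x_1)$, $(-x_2,-x_1)$, $(-x_2,x_1-x_2)$, $(x_1,x_1-x_2)$. Orbits partition $\mathbb{Z}^2$. The orbit length is the Euclidean length of the closed path through the six points in the listed order: $$\operatorname{length}(o(\mathbf{x}))=2\big(|2x_1-x_2|+|x_1+x_2|+|2x_2-x_1|\big).$$ *)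

(* Defs.v *)
From mathcomp Require Import all_boot all_order all_algebra finmap.
From mathcomp Require Import reals.
Set Implicit Arguments. Unset Strict Implicit. Unset Printing Implicit Defensive.
Import Order.TTheory GRing.Theory Num.Theory.
Local Open Scope ring_scope.


Definition pt := (int * int)%type.

Definition K1 (x : pt) : pt := (- x.1 + x.2, x.2).
Definition K2 (x : pt) : pt := (x.1, x.1 - x.2).

(* The orbit of x: the six points listed in the paper, as a finite set
   (so that two orbits are equal iff they have the same elements). *)
Definition orbit_pts (x : pt) : seq pt :=
  let: (x1, x2) := x in
  [:: (x1, x2); (- x1 + x2, x2); (- x1 + x2, - x1); (- x2, - x1);
      (- x2, x1 - x2); (x1, x1 - x2)].

Definition orbit (x : pt) : {fset pt} := [fset p | p in orbit_pts x]%fset.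

(* Euclidean length of the closed path through the six points of o(x). *)
Definition orbit_length (x : pt) : int :=
  let: (x1, x2) := x in
  2 * (`|2 * x1 - x2| + `|x1 + x2| + `|2 * x2 - x1|).

Definition box (K : nat) : seq pt :=
  [seq ((i%:Z - K%:Z), (j%:Z - K%:Z)) | i <- iota 0 (2 * K).+1, j <- iota 0 (2 * K).+1].

(* Every orbit of length <= T lies in box (truncn T) (each coordinate is at
   most T/6 in absolute value), so this enumerates all of them. *)
Definition orbits_upto (R : realType) (T : R) : seq ({fset pt} * int) :=
  undup [seq (orbit x, orbit_length x) |
          x <- box (Num.truncn T) & (orbit_length x)%:~R <= T].

Definition Ncount (R : realType) (T : R) : nat := size (orbits_upto T).

Definition Ssum (R : realType) (T : R) : int :=
  \sum_(o <- orbits_upto T) o.2.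

(* Main.v *)
Require Import Defs.
From mathcomp Require Import all_boot all_order all_algebra finmap.
From mathcomp Require Import reals.
From mathcomp Require Import zify ring lra.
Import Order.TTheory GRing.Theory Num.Theory.
Local Open Scope ring_scope.

Definition chamber (y : pt) : bool := (y.2 <= 2 * y.1) && (y.1 <= 2 * y.2).

Lemma orbitK1 x : Defs.orbit (K1 x) = Defs.orbit x.
Proof.
apply/fsetP => -[c d]; case: x => a b.
rewrite /Defs.orbit /orbit_pts /K1 /= !inE /= !xpair_eqE.
apply/idP/idP; lia.
Qed.

Lemma orbitK2 x : Defs.orbit (K2 x) = Defs.orbit x.
Proof.
apply/fsetP => -[c d]; case: x => a b.
rewrite /Defs.orbit /orbit_pts /K2 /= !inE /= !xpair_eqE.
apply/idP/idP; lia.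
Qed.

Lemma lenK1 x : orbit_length (K1 x) = orbit_length x.
Proof. case: x => a b; rewrite /orbit_length /K1 /=; lia. Qed.
Lemma lenK2 x : orbit_length (K2 x) = orbit_length x.
Proof. case: x => a b; rewrite /orbit_length /K2 /=; lia. Qed.

Lemma rep x : exists y, [/\ Defs.orbit y = Defs.orbit x,
  orbit_length y = orbit_length x & chamber y].
Proof.
have H : chamber x \/ chamber (K1 x) \/ chamber (K2 x) \/ chamber (K2 (K1 x)) \/
  chamber (K1 (K2 x)) \/ chamber (K1 (K2 (K1 x))).
  case: x => a b; rewrite /chamber /K1 /K2 /=; lia.
case: H => [h|[h|[h|[h|[h|h]]]]].
- by exists x.
- by exists (K1 x); rewrite orbitK1 lenK1.
- by exists (K2 x); rewrite orbitK2 lenK2.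
- by exists (K2 (K1 x)); rewrite orbitK2 lenK2 orbitK1 lenK1.
- by exists (K1 (K2 x)); rewrite orbitK1 lenK1 orbitK2 lenK2.
- by exists (K1 (K2 (K1 x))); rewrite orbitK1 lenK1 orbitK2 lenK2 orbitK1 lenK1.
Qed.

Lemma orbit_inj y y' : chamber y -> chamber y' -> Defs.orbit y = Defs.orbit y' -> y = y'.
Proof.
move=> hy hy' e.
have : y' \in Defs.orbit y by rewrite e; case: y' {e hy'} => a b; rewrite !inE eqxx.
case: y y' hy hy' {e} => [a b] [c d]; rewrite /chamber /=.
rewrite /Defs.orbit /orbit_pts !inE /= !xpair_eqE => h1 h2 h3.
apply/eqP; rewrite xpair_eqE. lia.
Qed.

Lemma len_chamber y : chamber y -> orbit_length y = 4 * (y.1 + y.2).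
Proof. case: y => a b; rewrite /chamber /orbit_length /=; lia. Qed.
Definition cnt (s : nat) : nat := ((2*s)%/3).+1 - (s+2)%/3.
Definition Dk (k : nat) : seq pt :=
  [seq ((a%:Z), (s%:Z - a%:Z)) | s <- iota 0 k.+1, a <- iota ((s+2)%/3) (cnt s)].

Lemma memD k y : (y \in Dk k) = (chamber y && (y.1 + y.2 <= k%:Z)).
Proof.
apply/idP/idP.
- case/allpairsPdep => s [a [hs ha ->]].
  move: hs ha; rewrite !mem_iota /chamber /cnt /=; lia.
- case: y => a b; rewrite /chamber /= => h.
  pose i : nat := absz a. pose s : nat := absz (a + b).
  have -> : (a, b) = (i%:Z, s%:Z - i%:Z) by apply/eqP; rewrite xpair_eqE /i /s; lia.
  apply: (@allpairs_f_dep _ (fun _ => nat) _ (fun (s i : nat) => ((i%:Z), (s%:Z - i%:Z)))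
     (iota 0 k.+1) (fun s => iota ((s+2)%/3) (cnt s)) s i); rewrite mem_iota /cnt /i /s; lia.
Qed.

Lemma uniqD k : uniq (Dk k).
Proof.
apply: allpairs_uniq_dep => [|s _|]; rewrite ?iota_uniq //.
move=> [s1 a1] [s2 a2] /= _ _ /eqP; rewrite xpair_eqE => /andP[/eqP h1 /eqP h2].
have e1 : a1 = a2 by lia.
have e2 : s1 = s2 by lia.
by subst.
Qed.
Lemma intRn (R : realType) (n : nat) : ((Posz n)%:~R : R) = n%:R.
Proof. by []. Qed.

Lemma perm_orbits (R : realType) (T : R) : 0 <= T ->
  perm_eq (orbits_upto T)
    [seq (Defs.orbit y, orbit_length y) | y <- Dk ((Num.truncn T) %/ 4)].
Proof.
move=> T0.
set K := Num.truncn T.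
apply: uniq_perm; first exact: undup_uniq.
  rewrite map_inj_in_uniq ?uniqD // => y y'; rewrite !memD => /andP[hy _] /andP[hy' _] [e _].
  exact: orbit_inj.
move=> z; rewrite mem_undup; apply/mapP/mapP.
- case=> x; rewrite mem_filter => /andP[hT _] ->.
  have [y [ey ly cy]] := rep x.
  exists y; last by rewrite ey ly.
  rewrite memD cy /=.
  have y0 : 0 <= y.1 + y.2 by move: cy; rewrite /chamber; lia.
  pose n : nat := absz (y.1 + y.2).
  have hl : orbit_length x = (4 * n)%N%:Z by rewrite -ly len_chamber // /n; lia.
  move: hT; rewrite hl intRn -truncn_ge_nat // -/K => h.
  rewrite /n; lia.
- case=> y; rewrite memD => /andP[cy hk] ->.
  exists y => //.
  case: y cy hk => a b cy hk; rewrite /chamber /= in cy hk.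
  pose n : nat := absz (a + b).
  have hl : orbit_length (a, b) = (4 * n)%N%:Z by rewrite /orbit_length /n; lia.
  have hK : (4 * n <= K)%N by rewrite /n; lia.
  rewrite mem_filter hl intRn -truncn_ge_nat // -/K hK /=.
  have -> : (a, b) = ((absz (a + K%:Z))%:Z - K%:Z, (absz (b + K%:Z))%:Z - K%:Z)
    by apply/eqP; rewrite xpair_eqE; lia.
  apply: (allpairs_f (fun i j : nat => (i%:Z - K%:Z, j%:Z - K%:Z))); rewrite mem_iota; lia.
Qed.
Definition F (k : nat) : nat := \sum_(0 <= s < k.+1) cnt s.
Definition G (k : nat) : nat := \sum_(0 <= s < k.+1) s * cnt s.

Lemma cnt_lo s : (s <= 3 * cnt s + 1)%N.
Proof. rewrite /cnt; lia. Qed.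
Lemma cnt_hi s : (3 * cnt s <= s + 3)%N.
Proof. rewrite /cnt; lia. Qed.

Lemma F_bounds k : (k * k.+1 <= 6 * F k + 2 * k.+1)%N /\ (6 * F k <= k * k.+1 + 6 * k.+1)%N.
Proof.
elim: k => [|k [IH1 IH2]]; first by rewrite /F big_nat1 /cnt.
rewrite /F big_nat_recr //= -/(F k).
have h1 := cnt_lo k.+1; have h2 := cnt_hi k.+1.
split; lia.
Qed.

Lemma G_bounds k : (2 * k ^ 3 <= 18 * G k + 2 * k)%N /\ (18 * G k <= 2 * k ^ 3 + 12 * k ^ 2 + 10 * k)%N.
Proof.
elim: k => [|k [IH1 IH2]]; first by rewrite /G big_nat1 /cnt.
rewrite /G big_nat_recr //= -/(G k).
have h1 := cnt_lo k.+1; have h2 := cnt_hi k.+1.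
have h3 : (k.+1 * k.+1 <= k.+1 * (3 * cnt k.+1 + 1))%N by rewrite leq_mul2l h1 orbT.
have h4 : (k.+1 * (3 * cnt k.+1) <= k.+1 * (k.+1 + 3))%N by rewrite leq_mul2l h2 orbT.
split; nia.
Qed.

Lemma sum_const_int (T0 : Type) (r : seq T0) (c : int) : \sum_(i <- r) c = c *+ size r.
Proof. elim: r => [|x r IH]; by rewrite ?big_nil ?big_cons ?IH ?mulrS. Qed.

Lemma sum_posz (T0 : Type) (r : seq T0) (f : T0 -> nat) :
  \sum_(i <- r) (f i)%:Z = (\sum_(i <- r) f i)%N%:Z.
Proof. elim: r => [|x r IH]; by rewrite ?big_nil ?big_cons ?IH ?PoszD. Qed.

Lemma sizeD k : size (Dk k) = F k.
Proof.
rewrite size_allpairs_dep /F /index_iota subn0.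
elim: k.+1 => [|n IH]; first by rewrite big_nil.
have -> : iota 0 n.+1 = iota 0 n ++ [:: n] by rewrite -addn1 iotaD.
by rewrite map_cat sumn_cat big_cat /= IH big_seq1 size_iota addn0.
Qed.

Lemma sumD k : \sum_(y <- Dk k) orbit_length y = (4 * G k)%N%:Z.
Proof.
rewrite big_allpairs_dep /=.
transitivity (\sum_(s <- iota 0 k.+1) (4 * (s * cnt s))%N%:Z).
  apply: eq_big_seq => s _.
  transitivity (\sum_(a <- iota ((s + 2) %/ 3) (cnt s)) (4 * s)%N%:Z).
    apply: eq_big_seq => a; rewrite mem_iota /cnt => ha.
    rewrite /orbit_length /=; lia.
  rewrite sum_const_int size_iota -mulr_natr natz; lia.
rewrite sum_posz /G /index_iota subn0 -big_distrr /=.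
by [].
Qed.

Lemma F_ge1 k : (1 <= F k)%N.
Proof. by rewrite /F big_nat_recl //= /cnt. Qed.

Lemma key (R : realType) (T : R) : 1 <= T ->
  exists k : nat, [/\ (Ncount T = F k), (Ssum T = (4 * G k)%N%:Z),
     4 * k%:R <= T & T < 4 * k%:R + 4].
Proof.
move=> T1; have T0 : 0 <= T by lra.
set K := Num.truncn T.
exists (K %/ 4)%N; split.
- by rewrite /Ncount (perm_size (@perm_orbits R T T0)) size_map sizeD.
- by rewrite /Ssum (perm_big _ (@perm_orbits R T T0)) big_map sumD.
- have h1 : ((K %/ 4) * 4 <= K)%N by apply: leq_divM.
  have h2 : (K%:R <= T) by rewrite truncn_le.
  have : (((K %/ 4) * 4)%N%:R <= K%:R :> R) by rewrite ler_nat.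
  rewrite natrM; lra.
- have h1 : (K.+1 <= (K %/ 4) * 4 + 4)%N by lia.
  have h2 : T < K.+1%:R by rewrite -truncn_le_nat.
  have : (K.+1%:R <= ((K %/ 4) * 4 + 4)%N%:R :> R) by rewrite ler_nat.
  rewrite natrD natrM; lra.
Qed.

Lemma bounds (R : realType) (T : R) : 1 <= T ->
  [/\ -2 * T <= (Ncount T)%:R - T ^+ 2 / 96, (Ncount T)%:R - T ^+ 2 / 96 <= 2 * T,
      - T ^+ 2 <= (Ssum T)%:~R - T ^+ 3 / 144, (Ssum T)%:~R - T ^+ 3 / 144 <= T ^+ 2
    & 1 <= (Ncount T)%:R :> R].
Proof.
move=> T1; have [k [-> -> h1 h2]] := @key R T T1.
rewrite intRn.
have [a1 a2] := F_bounds k; have [b1 b2] := G_bounds k; have c := F_ge1 k.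
move: a1 a2 b1 b2 c; rewrite -!(ler_nat R) !natrD !natrM.
set f := (F k)%:R; set g := (G k)%:R; set x := k%:R.
have x0 : 0 <= x :> R by rewrite ler0n.
rewrite -[1%:R]/(1 : R) => a1 a2 b1 b2 c.
have e2 : T ^+ 2 = T * T by rewrite expr2.
have e3 : T ^+ 3 = T * T * T by rewrite !exprS expr0 mulr1 mulrA.
have ex2 : x ^+ 2 = x * x by rewrite expr2.
have ex3 : x ^+ 3 = x * x * x by rewrite !exprS expr0 mulr1 mulrA.
rewrite e2 e3.
have q1 : 16 * (x * x) <= T * T by nra.
have q2 : T * T <= 16 * ((x + 1) * (x + 1)) by nra.
have q3 : 64 * (x * x * x) <= T * T * T by nra.
have q4 : T * T * T <= 64 * ((x+1) * (x + 1) * (x + 1)) by nra.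
split; nra.
Qed.

Theorem mainTheorem18 (R : realType) :
  (exists C : R, forall T : R, 1 <= T ->
     `|(Ncount T)%:R - T ^+ 2 / 96| <= C * T) /\
  (exists C : R, forall T : R, 1 <= T ->
     `|(Ssum T)%:~R - T ^+ 3 / 144| <= C * T ^+ 2) /\
  (exists C : R, forall T : R, 1 <= T ->
     `|(Ssum T)%:~R / (Ncount T)%:R - 2 / 3 * T| <= C).
Proof.
split; [|split].
- exists 2 => T T1; have [? ? _ _ _] := @bounds R T T1; rewrite ler_norml; lra.
- exists 1 => T T1; have [_ _ ? ? _] := @bounds R T T1; rewrite ler_norml; lra.
exists (3 * (384 * 384)) => T T1; have [a1 a2 b1 b2 c] := @bounds R T T1.
set f := (Ncount T)%:R in a1 a2 c *; set g := (Ssum T)%:~R in b1 b2 *.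
have f0 : 0 < f by lra.
have -> : g / f - 2 / 3 * T = (g - 2 / 3 * T * f) / f by field; lra.
rewrite normrM normfV (gtr0_norm f0) ler_pdivrMr //.
have e2 : T ^+ 2 = T * T by rewrite expr2.
have e3 : T ^+ 3 = T * T * T by rewrite !exprS expr0 mulr1 mulrA.
rewrite e2 e3 in a1 a2 b1 b2.
have p1 : T * (f - T * T / 96) <= 2 * T * T by nra.
have p2 : - (2 * T * T) <= T * (f - T * T / 96) by nra.
have q : T * T <= (384 * 384) * f.
  case: (lerP T 384) => hT; first nra.
  nra.
rewrite ler_norml; apply/andP; split; nra.
Qed.
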